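(* For every $\epsilon$ with $0<\epsilon<1/4$ and every integer $k\ge 1$, $$R(K_4^*,k)\le (1+\epsilon)^k\epsilon^{-1}k!.$$ In particular, $R(K_4^*,k)\le (k-1)e(1+o(1))k!$ as $k\to\infty$.
   Context: For a family $\mathcal{G}$ of graphs, $R(\mathcal{G},k)$ is the smallest $n$ such that every coloring of the edges of $K_n$ with $k$ colors contains a monochromatic subgraph isomorphic to some member of $\mathcal{G}$. $K_4^*$ is the family of graphs consisting of: $K_4$; the graph obtained from $K_4$ minus an edge by attaching a pendant edge at one of its two vertices of degree $2$; and the triangle with a pendant edge attached at each of its three vertices. (Equivalently, for a vertex $v$ of $K_4$ with neighbors $q_1,q_2,q_3$, $K_4^*$ is the family of graphs obtained from the triangle $K_4-v$ by adding, for each $i$, an edge $q_ir_i$ not in the triangle, with $r_i$ a vertex of the triangle or a new vertex, new vertices possibly shared, the three added edges pairwise distinct.) *)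

(* Defs.v *)
From HB Require Import structures.
From mathcomp Require Import all_boot all_order all_algebra.
Set Implicit Arguments. Unset Strict Implicit. Unset Printing Implicit Defensive.

(* A simple graph H is given by a symmetric irreflexive relation on a finite
   vertex type. An edge-colouring of K_n with k colours is a symmetric map
   c : 'I_n -> 'I_n -> 'I_k (values on the diagonal are irrelevant). *)

Definition mono_copy (V : finType) (H : rel V) (n k : nat)
  (c : 'I_n -> 'I_n -> 'I_k) : Prop :=
  exists (f : V -> 'I_n) (i : 'I_k),
    injective f /\ forall x y : V, H x y -> c (f x) (f y) = i.

Definition K4 : rel 'I_4 := fun x y => x != y.

(* K_4 minus the edge {2,3} (vertices 2,3 have degree 2), plus the pendant
   edge {2,4}. *)
Definition K4e_pend_edge (a b : nat) : bool :=
  [|| (a < 4) && (b < 4) && (a != b) && ~~ ((a == 2) && (b == 3))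
                                     && ~~ ((a == 3) && (b == 2)),
      (a == 2) && (b == 4) | (a == 4) && (b == 2)].
Definition K4e_pend : rel 'I_5 := fun x y => K4e_pend_edge x y.

(* Triangle 0,1,2 with pendant edges {0,3}, {1,4}, {2,5}. *)
Definition tri_pend_edge (a b : nat) : bool :=
  [|| (a < 3) && (b < 3) && (a != b),
      (b == a + 3) && (a < 3) | (a == b + 3) && (b < 3)].
Definition tri_pend : rel 'I_6 := fun x y => tri_pend_edge x y.

Definition mono_K4star (n k : nat) (c : 'I_n -> 'I_n -> 'I_k) : Prop :=
  mono_copy K4 c \/ mono_copy K4e_pend c \/ mono_copy tri_pend c.

Definition ramsey_K4star_prop (k n : nat) : Prop :=
  forall c : 'I_n -> 'I_n -> 'I_k,
    (forall x y, c x y = c y x) -> mono_K4star c.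

(* Main.v *)
Require Import Defs.
From HB Require Import structures.
From mathcomp Require Import all_boot all_order all_algebra.
From mathcomp Require Import zify ring lra.
From Stdlib Require Import Classical.
Set Implicit Arguments. Unset Strict Implicit. Unset Printing Implicit Defensive.
Import Order.TTheory GRing.Theory Num.Theory.

Definition nb N K (c : 'I_N -> 'I_N -> 'I_K) (S : {set 'I_N}) (x : 'I_N) (i : 'I_K)
  : {set 'I_N} := [set w in S | (w != x) && (c x w == i)].

Definition config N K (c : 'I_N -> 'I_N -> 'I_K) (S : {set 'I_N}) : Prop :=
  exists i x y z, [&& x \in S, y \in S, z \in S, x != y, y != z & x != z] /\
    [/\ c x y = i, c y z = i & c x z = i] /\
    [&& 2 < #|nb c S x i|, 2 < #|nb c S y i| & 2 < #|nb c S z i|].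

Lemma card_sumP (T : finType) (S : {set T}) (p : pred T) :
  #|[set w in S | p w]| = \sum_(w in S) p w.
Proof.
rewrite -sum1_card big_mkcond [RHS]big_mkcond /=; apply: eq_bigr => w _.
by rewrite inE; case: (w \in S); case: (p w).
Qed.

Lemma nb_mono N K (c : 'I_N -> 'I_N -> 'I_K) (S T : {set 'I_N}) x i :
  S \subset T -> #|nb c S x i| <= #|nb c T x i|.
Proof.
move=> ST; apply: subset_leq_card; apply/subsetP => w; rewrite !inE.
by case/andP=> /(subsetP ST) -> ->.
Qed.

Lemma config_mono N K (c : 'I_N -> 'I_N -> 'I_K) (S T : {set 'I_N}) :
  S \subset T -> config c S -> config c T.
Proof.
move=> ST [i [x [y [z [H1 [H2 H3]]]]]]; exists i, x, y, z; split => //.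
  by move: H1 => /and4P [/(subsetP ST) -> /(subsetP ST) -> /(subsetP ST) ->] /and3P [-> -> ->].
case/and3P: H3 => a b d.
by rewrite !(leq_trans _ (nb_mono c x i ST)) ?(leq_trans _ (nb_mono c y i ST)) ?(leq_trans _ (nb_mono c z i ST)).
Qed.
Lemma copy_of n k (c : 'I_n -> 'I_n -> 'I_k) m (H : rel 'I_m) (s : seq 'I_n) x0 i :
  size s = m -> uniq s ->
  (forall a b : 'I_m, H a b -> c (nth x0 s a) (nth x0 s b) = i) -> mono_copy H c.
Proof.
move=> sz us He; exists (fun j : 'I_m => nth x0 s j), i; split => //.
by move=> a b /eqP; rewrite nth_uniq ?sz // => /eqP /val_inj.
Qed.

Ltac solve_uniq := rewrite /= !inE !negb_or;
  repeat (apply/andP; split); (done || by rewrite eq_sym).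

Ltac solve_edges csym :=
  move=> [[|[|[|[|[|[|a]]]]]] Ha] [[|[|[|[|[|[|b]]]]]] Hb] //=;
  try (rewrite /K4 -(inj_eq val_inj) /=); move=> //= _;
  (done || by rewrite csym).

Lemma tri_case n k (c : 'I_n -> 'I_n -> 'I_k) i (x y z r : 'I_n) :
  (forall a b, c a b = c b a) ->
  x != y -> y != z -> x != z -> r != x -> r != y -> r != z ->
  c x y = i -> c y z = i -> c x z = i -> c x r = i -> c y r = i -> c z r = i ->
  mono_copy K4 c.
Proof.
move=> csym *; apply: (@copy_of _ _ _ _ _ [:: x; y; z; r] x i) => //.
  solve_uniq.
solve_edges csym.
Qed.

Lemma pend_case n k (c : 'I_n -> 'I_n -> 'I_k) i (x y z r w : 'I_n) :
  (forall a b, c a b = c b a) ->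
  x != y -> y != z -> x != z -> r != x -> r != y -> r != z ->
  w != x -> w != y -> w != z -> w != r ->
  c x y = i -> c y z = i -> c x z = i -> c x r = i -> c y r = i -> c z w = i ->
  mono_copy K4e_pend c.
Proof.
move=> csym *; apply: (@copy_of _ _ _ _ _ [:: x; y; z; r; w] x i) => //.
  solve_uniq.
solve_edges csym.
Qed.

Lemma trip_case n k (c : 'I_n -> 'I_n -> 'I_k) i (x y z u v w : 'I_n) :
  (forall a b, c a b = c b a) ->
  x != y -> y != z -> x != z -> u != x -> u != y -> u != z ->
  v != x -> v != y -> v != z -> v != u ->
  w != x -> w != y -> w != z -> w != u -> w != v ->
  c x y = i -> c y z = i -> c x z = i -> c x u = i -> c y v = i -> c z w = i ->
  mono_copy tri_pend c.
Proof.
move=> csym *; apply: (@copy_of _ _ _ _ _ [:: x; y; z; u; v; w] x i) => //.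
  solve_uniq.
solve_edges csym.
Qed.

Lemma extra N K (c : 'I_N -> 'I_N -> 'I_K) S x i y z :
  2 < #|nb c S x i| -> exists r, [/\ r \in S, r != x, c x r = i, r != y & r != z].
Proof.
move=> h.
have : 0 < #|nb c S x i :\ y :\ z|.
  move: h; rewrite (cardsD1 y) (cardsD1 z (_ :\ y)); case: (_ \in _); case: (_ \in _) => /=; lia.
case/card_gt0P => r; rewrite !inE => /and4P [rz ry rS /andP [rx /eqP cr]].
by exists r.
Qed.

Lemma config_K4star n k (c : 'I_n -> 'I_n -> 'I_k) :
  (forall a b, c a b = c b a) -> config c setT -> mono_K4star c.
Proof.
move=> csym [i [x [y [z [H1 [[cxy cyz cxz] H3]]]]]].
move: H1 => /and4P [_ _ _] /and3P [xy yz xz].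
case/and3P: H3 => dx dy dz.
have [u [_ ux cxu uy uz]] := extra y z dx.
have [v [_ vy cyv vx vz]] := extra x z dy.
have [w [_ wz czw wx wy]] := extra x y dz.
have cyx : c y x = i by rewrite csym.
have czy : c z y = i by rewrite csym.
have czx : c z x = i by rewrite csym.
case: (eqVneq u v) => [euv|nuv].
  subst v; case: (eqVneq u w) => [euw|nuw].
    subst w; left; apply: (@tri_case _ _ c i x y z u) => //; by rewrite csym.
  right; left; apply: (@pend_case _ _ c i x y z u w) => //; by rewrite eq_sym.
case: (eqVneq u w) => [euw|nuw].
  subst w; right; left; apply: (@pend_case _ _ c i x z y u v) => //;
    by rewrite ?csym // eq_sym.
case: (eqVneq v w) => [evw|nvw].
  subst w; right; left; apply: (@pend_case _ _ c i y z x v u) => //;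
    by rewrite ?csym // eq_sym.
right; right; apply: (@trip_case _ _ c i x y z u v w) => //; by rewrite eq_sym.
Qed.
Definition Pr N K (c : 'I_N -> 'I_N -> 'I_K) (a n : nat) : Prop :=
  forall (S : {set 'I_N}) (A : {set 'I_K}), #|A| <= a -> n <= #|S| ->
  (forall x y, x \in S -> y \in S -> x != y -> c x y \in A) -> config c S.

Lemma base N K (c : 'I_N -> 'I_N -> 'I_K) : Pr c 1 4.
Proof.
move=> S A hA hS hc.
have [x xS] : exists x, x \in S by apply/card_gt0P; lia.
have : 2 < #|S :\ x| by move: hS; rewrite (cardsD1 x) xS; lia.
case/card_gt2P => y [z [w [[]]]]; rewrite !inE.
move=> /andP [yx yS] /andP [zx zS] /andP [wx wS] [yz zw wy].
have xy : x != y by rewrite eq_sym.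
have xz : x != z by rewrite eq_sym.
have xw : x != w by rewrite eq_sym.
have zy : z != y by rewrite eq_sym.
have wz : w != z by rewrite eq_sym.
have yw : y != w by rewrite eq_sym.
have eqA : {in A &, forall p q, p = q}.
  by move=> p q pA qA; move/card_le1_eqP: (leq_trans hA (leqnn 1)) => h; have := h p q pA qA.

have cc : forall p q, p \in S -> q \in S -> p != q -> c p q = c x y.
  by move=> p q pS qS pq; apply: eqA; apply: hc; rewrite // eq_sym.
exists (c x y), x, y, z.
split; first by rewrite xS yS zS yz (eq_sym x y) yx (eq_sym x z) zx.
split; first by split; apply: cc; rewrite // eq_sym.
have mem : forall p q, p \in S -> q \in S -> q != p -> q \in nb c S p (c x y).
  by move=> p q pS qS qp; rewrite !inE qS qp cc // ?eqxx // eq_sym.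
apply/and3P; split; apply/card_gt2P.
- by exists y, z, w; split; split; rewrite ?mem.
- by exists x, z, w; split; split; rewrite ?mem.
- by exists x, y, w; split; split; rewrite ?mem.
Qed.
Lemma step N K (c : 'I_N -> 'I_N -> 'I_K) a m :
  (forall x y, c x y = c y x) -> 2 < m -> Pr c a m -> Pr c a.+1 (a.+1 * m.+1 + 2).
Proof.
move=> csym m2 IH S A hA hS hc.
case: (classic (config c S)) => // nC; exfalso.
pose W i := [set w in S | #|nb c S w i| <= 2].
pose bad v := \sum_(i in A) #|nb c (W i) v i|.
have C1 : forall v i, v \in S -> i \in A -> #|nb c S v i| <= m.-1 + #|nb c (W i) v i|.
  move=> v i vS iA.
  case: (leqP #|nb c S v i| 2) => [h|dv]; first lia.
  pose T := nb c S v i :\: W i.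
  have sub : nb c S v i \subset T :|: nb c (W i) v i.
    apply/subsetP => w; rewrite !inE => /andP [wS /andP [wv cw]].
    rewrite wS wv cw /=; by case: (#|nb c S w i| <= 2); rewrite ?orbT.
  have hT : #|T| <= m.-1.
    rewrite leqNgt; apply/negP => hT; apply: (nC).
    apply: (@config_mono _ _ c T S).
      by apply/subsetP => w; rewrite !inE => /andP [_ /andP [wS _]].
    apply: (IH T (A :\ i)).
    - by move: hA; rewrite (cardsD1 i A) iA; lia.
    - lia.
    move=> x y xT yT xy; rewrite inE.
    move: (xT) (yT); rewrite !inE => /andP [xW /andP [xS /andP [xv cvx]]].
    move=> /andP [yW /andP [yS /andP [yv cvy]]].
    rewrite hc // andbT; apply/eqP => cxy; apply: (nC).
    exists i, v, x, y; split; first by rewrite vS xS yS xy eq_sym xv eq_sym yv.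
    split; first by split => //; apply/eqP.
    move: xW yW; rewrite xS yS /= -!ltnNge => -> ->; by rewrite dv.
  have := leq_trans (subset_leq_card sub) (leq_card_setU _ _).1; lia.
have C2 : forall v, v \in S -> #|S| <= (\sum_(i in A) #|nb c S v i|).+1.
  move=> v vS.
  under eq_bigr do rewrite /nb card_sumP.
  rewrite exchange_big /=.
  have : \sum_(w in S) (w != v : nat) <= \sum_(w in S) \sum_(i in A) ((w != v) && (c v w == i)).
    apply: leq_sum => w wS; case: (eqVneq w v) => [->|wv] //=.
    by rewrite (bigD1 (c v w)) ?hc // 1?eq_sym // eqxx /= leq_addr.
  rewrite -card_sumP.
  have -> : [set w in S | w != v] = S :\ v by apply/setP => w; rewrite !inE andbC.
  move: (cardsD1 v S); rewrite vS /=; lia.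
have [v vS hv] : exists2 v, v \in S & bad v <= 2 * #|A|.
  case: (pickP [pred v in S | bad v <= 2 * #|A|]) => [v /andP [vS hv] | none].
    by exists v.
  have allv : forall v, v \in S -> 2 * #|A| < bad v.
    by move=> v vS; move: (none v); rewrite /= vS /= ltnNge => ->.
  have lo : \sum_(v in S) (2 * #|A|).+1 <= \sum_(v in S) bad v by apply: leq_sum.
  have hi : \sum_(v in S) bad v <= #|A| * (#|S| * 2).
    rewrite /bad exchange_big /= -sum_nat_const; apply: leq_sum => i iA.
    have -> : \sum_(v in S) #|nb c (W i) v i| = \sum_(w in W i) #|nb c S w i|.
      under eq_bigr do rewrite /nb card_sumP.
      rewrite exchange_big /=; apply: eq_bigr => w wW.
      rewrite /nb card_sumP; apply: eq_bigr => u uS.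
      by rewrite eq_sym csym.
    apply: (@leq_trans (\sum_(w in W i) 2)).
      by apply: leq_sum => w; rewrite inE => /andP [].
    rewrite sum_nat_const leq_mul2r /=; apply: subset_leq_card.
    by apply/subsetP => w; rewrite inE => /andP [].
  move: (leq_trans lo hi); rewrite sum_nat_const; nia.
have := C2 v vS.
have : \sum_(i in A) #|nb c S v i| <= \sum_(i in A) (m.-1 + #|nb c (W i) v i|).
  by apply: leq_sum => i iA; apply: C1.
rewrite big_split /= sum_nat_const -/(bad v).
have hm : m.-1 = m - 1 by lia.
have h1 := leq_mul hA (leqnn m.+1).
have h2 : #|A| * (m - 1) + 2 * #|A| = #|A| * m.+1 by rewrite (mulnC 2) -mulnDr; congr (_ * _); lia.
rewrite hm; move: hv; clearbody bad; move: (bad v) => b hv s1 s2.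
move: (\sum_(i in A) #|nb c S v i|) s1 s2 => s s1 s2.
move: #|S| hS s2 => nS hS s2. move: #|A| hA h1 h2 hv s1 => nA *. nia.
Qed.
Fixpoint rr (j : nat) : nat :=
  match j with 0 => 4 | j'.+1 => j.+1 * (rr j').+1 + 2 end.

Lemma rr_ge j : 2 < rr j.
Proof. case: j => [|j] //=; lia. Qed.

Lemma rr_prop N K (c : 'I_N -> 'I_N -> 'I_K) :
  (forall x y, c x y = c y x) -> forall j, Pr c j.+1 (rr j).
Proof.
move=> csym; elim=> [|j IH]; first exact: base.
by have := step csym (rr_ge j) IH.
Qed.

Lemma rr_bound j : rr j <= (j + 5) * (j.+1)`!.
Proof.
case: j => [|j] //.
elim: j => [|j IH] //.
rewrite [rr _]/= -/(rr j.+1).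
have f : 2 <= (j.+2)`!.
  rewrite factS; have := fact_gt0 j.+1; nia.
rewrite [(j.+3)`!]factS.
move: IH f; move: (rr j.+1) ((j.+2)`!) => x y; nia.
Qed.

Local Open Scope ring_scope.

Lemma bern (R : realFieldType) (e : R) k : 0 <= e -> 1 + k%:R * e <= (1 + e) ^+ k.
Proof.
move=> e0; elim: k => [|k IH]; first by rewrite expr0 mul0r addr0.
rewrite exprS -natr1.
have h : 0 <= k%:R * e by rewrite mulr_ge0 // ler0n.
have h2 : 0 <= 1 + e by lra.
have := ler_wpM2l h2 IH. nra.
Qed.


Theorem lemma1 (R : realFieldType) (eps : R) (k : nat) :
  0 < eps -> eps < 4^-1 -> (1 <= k)%N ->
  exists n : nat,
    (n%:R <= (1 + eps) ^+ k / eps * (k`!)%:R) /\ ramsey_K4star_prop k n.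
Proof.
move=> e0 e4; case: k => [|j] // _.
exists (rr j); split.
  have h1 : (rr j)%:R <= ((j.+1 + 4)%N)%:R * (j.+1)`!%:R :> R.
    by rewrite -natrM ler_nat; have := rr_bound j; lia.
  apply: (le_trans h1); rewrite ler_wpM2r ?ler0n //.
  rewrite ler_pdivlMr //.
  have := bern (j.+1) (ltW e0).
  have e4' : 4 * eps < 1.
    by move: e4; rewrite -(ltr_pM2l (_ : 0 < 4)) ?mulfV //; lra.
  rewrite natrD; lra.
move=> c csym.
apply: config_K4star => //.
apply: (@rr_prop _ _ c csym j _ [set: 'I_j.+1]).
- by rewrite cardsT card_ord.
- by rewrite cardsT card_ord.
- by move=> x y _ _ _; rewrite inE.
Qed.
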